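(* Let $n\geq 1$ be an integer and let $L_1,L_2$ be two distinct regular fibres of the $(n,1)$-Seifert fibration $\mathcal{S}_{n,1}\colon S^3\to\mathbb{C}P(1)$, $(z_1,z_2)\mapsto[z_2/z_1^{n}]$. Then there exists a smooth non-singular vector field $X_n$ on $S^3$ which is positively collinear to $H_{n,1}$ at every point of $L_1$, negatively collinear to $H_{n,1}$ at every point of $L_2$, and not collinear to $H_{n,1}$ at any point of $S^3\setminus(L_1\cup L_2)$.
   Context: $S^3=\{(z_1,z_2)\in\mathbb{C}^2: |z_1|^2+|z_2|^2=1\}$. For relatively prime integers $p\neq0$, $q>0$, the $(p,q)$-Seifert fibration is $\mathcal{S}_{p,q}(z_1,z_2)=[z_2^q/z_1^p]\in\mathbb{C}P(1)\cong S^2$; its fibres are circles, the two singular fibres being $\{z_1=0\}$ and $\{z_2=0\}$ and the others (regular fibres) being $(p,q)$-torus knots on the tori $|z_1|=a,|z_2|=b$. $H_{p,q}$ is the unit vector field tangent to the fibres of $\mathcal{S}_{p,q}$, oriented by the circle action $(z_1,z_2)\mapsto(e^{iqt}z_1,e^{ipt}z_2)$ (so $H_{1,1}(z_1,z_2)=(iz_1,iz_2)$). *)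

(* Defs.v *)
From Stdlib Require Import Reals.
From Coquelicot Require Import Coquelicot.
Open Scope R_scope.

(* A point of C^2 = R^4 is a pair (z1, z2) of Coquelicot complex numbers,
   z1 = (x1, y1), z2 = (x2, y2). *)
Definition pt := (C * C)%type.

Definition coord (i : nat) (p : pt) : R :=
  match i with
  | O => fst (fst p)
  | 1%nat => snd (fst p)
  | 2%nat => fst (snd p)
  | _ => snd (snd p)
  end.

Definition shift (i : nat) (t : R) (p : pt) : pt :=
  match i with
  | O => ((fst (fst p) + t, snd (fst p)), snd p)
  | 1%nat => ((fst (fst p), snd (fst p) + t), snd p)
  | 2%nat => (fst p, (fst (snd p) + t, snd (snd p)))
  | _ => (fst p, (fst (snd p), snd (snd p) + t))
  end.

Fixpoint Ck (k : nat) (f : pt -> R) : Prop :=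
  match k with
  | O => forall p, continuous f p
  | S k' => (forall p, continuous f p) /\
      forall i, (i < 4)%nat -> exists g : pt -> R,
        (forall p, is_derive (fun t => f (shift i t p)) 0 (g p)) /\ Ck k' g
  end.

Definition smooth (f : pt -> R) : Prop := forall k, Ck k f.

Definition S3 (p : pt) : Prop :=
  coord 0 p ^ 2 + coord 1 p ^ 2 + coord 2 p ^ 2 + coord 3 p ^ 2 = 1.

(* A smooth vector field on S^3: a smooth map R^4 -> R^4 (equivalently, up
   to extension, a smooth map on S^3) which is tangent to S^3 along S^3. *)
Definition smooth_field (X : pt -> pt) : Prop :=
  forall i, (i < 4)%nat -> smooth (fun p => coord i (X p)).

Definition dot (u v : pt) : R :=
  coord 0 u * coord 0 v + coord 1 u * coord 1 v
  + coord 2 u * coord 2 v + coord 3 u * coord 3 v.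

Definition tangent_to_S3 (X : pt -> pt) : Prop :=
  forall p, S3 p -> dot p (X p) = 0.

Definition zero_pt : pt := ((0, 0), (0, 0)).

Definition rscale (l : R) (v : pt) : pt :=
  ((l * fst (fst v), l * snd (fst v)), (l * fst (snd v), l * snd (snd v))).

(* Generator of the circle action (z1,z2) |-> (e^{iqt} z1, e^{ipt} z2)
   with (p,q) = (n,1):  (i z1, i n z2). *)
Definition gen_n1 (n : nat) (p : pt) : pt :=
  ((- snd (fst p), fst (fst p)),
   (- INR n * snd (snd p), INR n * fst (snd p))).

(* H_{n,1}: the unit vector field tangent to the fibres of S_{n,1},
   oriented by the circle action. *)
Definition H_n1 (n : nat) (p : pt) : pt :=
  rscale (/ sqrt (dot (gen_n1 n p) (gen_n1 n p))) (gen_n1 n p).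

Fixpoint Cpow (z : C) (n : nat) : C :=
  match n with O => RtoC 1 | S m => Cmult z (Cpow z m) end.

(* Its singular fibres {z1 = 0} and {z2 = 0} lie over [1:0] and [0:1];
   the regular fibres are the fibres over [w : 1] with w <> 0, i.e.
   { (z1,z2) in S^3 | z2 = w z1^n }. *)
Definition fibre_over (n : nat) (w : C) (p : pt) : Prop :=
  S3 p /\ snd p = Cmult w (Cpow (fst p) n).

Definition regular_fibre (n : nat) (L : pt -> Prop) : Prop :=
  exists w : C, w <> RtoC 0 /\ forall p, L p <-> fibre_over n w p.

(* Main.v *)
Require Import Defs.
From Stdlib Require Import Reals Lra Lia Psatz.
From Coquelicot Require Import Coquelicot.
Open Scope R_scope.

Inductive Poly : (pt -> R) -> Prop :=
| Pc c : Poly (fun _ => c)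
| Pcoord i : Poly (coord i)
| Padd f g : Poly f -> Poly g -> Poly (fun p => f p + g p)
| Pmul f g : Poly f -> Poly g -> Poly (fun p => f p * g p)
| Pext f g : (forall p, f p = g p) -> Poly f -> Poly g.

Lemma coord_cont i p : continuous (coord i) p.
Proof.
  destruct p as [[x1 y1] [x2 y2]].
  destruct i as [|[|[|i]]]; simpl.
  - apply (continuous_comp fst fst). apply continuous_fst.
    apply continuous_fst.
  - apply (continuous_comp fst snd). apply continuous_fst.
    apply continuous_snd.
  - apply (continuous_comp snd fst). apply continuous_snd.
    apply continuous_fst.
  - apply (continuous_comp snd snd). apply continuous_snd.
    apply continuous_snd.
Qed.

Lemma Poly_cont f : Poly f -> forall p, continuous f p.
Proof.
  induction 1; intro p.
  - apply continuous_const.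
  - apply coord_cont.
  - apply (continuous_plus f g); auto.
  - apply (continuous_mult f g); auto.
  - eapply continuous_ext; eauto.
Qed.

Lemma coord_shift i j : exists c, forall p t, coord j (shift i t p) = coord j p + c * t.
Proof.
  destruct i as [|[|[|i]]]; destruct j as [|[|[|j]]];
  solve [exists 0; intros [[x1 y1] [x2 y2]] t; simpl; ring
        | exists 1; intros [[x1 y1] [x2 y2]] t; simpl; ring].
Qed.

Lemma shift0 i p : shift i 0 p = p.
Proof.
  destruct p as [[x1 y1] [x2 y2]].
  destruct i as [|[|[|i]]]; simpl; rewrite Rplus_0_r; reflexivity.
Qed.

Lemma Poly_deriv f : Poly f -> forall i, exists g, Poly g /\
  forall p, is_derive (fun t => f (shift i t p)) 0 (g p).
Proof.
  induction 1; intro k.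
  - exists (fun _ => 0). split. constructor. intro p.
    apply (is_derive_const c 0).
  - destruct (coord_shift k i) as [c Hc].
    exists (fun _ => c). split. constructor. intro p.
    eapply is_derive_ext. intro t; symmetry; apply Hc.
    auto_derive. auto. ring.
  - destruct (IHPoly1 k) as [f' [Hf1 Hf2]]. destruct (IHPoly2 k) as [g' [Hg1 Hg2]].
    exists (fun p => f' p + g' p). split. constructor; auto.
    intro p. apply (is_derive_plus (fun t => f (shift k t p)) (fun t => g (shift k t p))); auto.
  - destruct (IHPoly1 k) as [f' [Hf1 Hf2]]. destruct (IHPoly2 k) as [g' [Hg1 Hg2]].
    exists (fun p => f' p * g p + f p * g' p). split.
    + constructor; constructor; auto.
    + intro p.
      generalize (is_derive_mult (fun t => f (shift k t p)) (fun t => g (shift k t p)) 0 _ _ (Hf2 p) (Hg2 p)).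
      rewrite shift0. intro HH. apply HH. intros; apply Rmult_comm.
  - destruct (IHPoly k) as [f' [Hf1 Hf2]]. exists f'. split; auto.
    intro p. eapply is_derive_ext; [|apply Hf2]. intro; simpl; auto.
Qed.

Lemma Poly_Ck k : forall f, Poly f -> Ck k f.
Proof.
  induction k; intros f Hf; simpl.
  - apply Poly_cont; auto.
  - split. apply Poly_cont; auto.
    intros i _. destruct (Poly_deriv f Hf i) as [g [Hg1 Hg2]].
    exists g; split; auto.
Qed.

Lemma Poly_smooth f : Poly f -> smooth f.
Proof. intros Hf k; apply Poly_Ck; auto. Qed.

Lemma Pneg f : Poly f -> Poly (fun p => - f p).
Proof. intro H. apply (Pext (fun p => (-1) * f p)). intro; ring. apply Pmul; auto. apply Pc. Qed.
Lemma Psub f g : Poly f -> Poly g -> Poly (fun p => f p - g p).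
Proof. intros H1 H2. apply (Pext (fun p => f p + - g p)). intro; ring. apply Padd; auto. apply Pneg; auto. Qed.

Definition zr n (p : pt) := fst (Defs.Cpow (fst p) n).
Definition zi n (p : pt) := snd (Defs.Cpow (fst p) n).

Lemma PZ n : Poly (zr n) /\ Poly (zi n).
Proof.
  induction n as [|m [IH1 IH2]].
  - split. apply (Pext (fun _ => 1)). intro; reflexivity. apply Pc.
    apply (Pext (fun _ => 0)). intro; reflexivity. apply Pc.
  - split.
    + apply (Pext (fun p => coord 0 p * zr m p - coord 1 p * zi m p)). intro; reflexivity.
      apply Psub; apply Pmul; auto; apply Pcoord.
    + apply (Pext (fun p => coord 0 p * zi m p + coord 1 p * zr m p)). intro; reflexivity.
      apply Padd; apply Pmul; auto; apply Pcoord.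
Qed.

Definition qr n (w : C) p := coord 2 p - (fst w * zr n p - snd w * zi n p).
Definition qi n (w : C) p := coord 3 p - (fst w * zi n p + snd w * zr n p).
Definition uf n w1 w2 p := qr n w1 p * qr n w2 p - qi n w1 p * qi n w2 p.
Definition vf n w1 w2 p := qr n w1 p * qi n w2 p + qi n w1 p * qr n w2 p.
Definition af n w1 w2 p := qr n w2 p * qr n w2 p + qi n w2 p * qi n w2 p
   - (qr n w1 p * qr n w1 p + qi n w1 p * qi n w1 p).

Ltac solve_poly := repeat (first [apply Padd | apply Psub | apply Pmul | apply Pneg
   | apply Pc | apply Pcoord | apply (proj1 (PZ _)) | apply (proj2 (PZ _)) ]).

Lemma Pq n w : Poly (qr n w) /\ Poly (qi n w).
Proof. split; unfold qr, qi; solve_poly. Qed.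

Lemma Puva n w1 w2 : Poly (uf n w1 w2) /\ Poly (vf n w1 w2) /\ Poly (af n w1 w2).
Proof.
  destruct (Pq n w1) as [A B]. destruct (Pq n w2) as [C D].
  unfold uf, vf, af; repeat split; solve_poly; auto.
Qed.

Definition Xf n (A U V : R) (p : pt) : pt :=
  ((A * (- coord 1 p) + (- U * coord 2 p - V * coord 3 p),
    A * coord 0 p + (U * coord 3 p - V * coord 2 p)),
   (A * (- INR n * coord 3 p) + (U * coord 0 p + V * coord 1 p),
    A * (INR n * coord 2 p) + (V * coord 0 p - U * coord 1 p))).

Lemma Xf_tangent n A U V p : dot p (Xf n A U V p) = 0.
Proof. destruct p as [[x1 y1] [x2 y2]]; unfold dot, Xf; simpl; ring. Qed.

Lemma GG_pos n p : (1 <= n)%nat -> S3 p -> 0 < dot (gen_n1 n p) (gen_n1 n p).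
Proof.
  intros Hn HS. destruct p as [[x1 y1] [x2 y2]]; unfold dot, gen_n1, S3 in *; simpl in *.
  assert (1 <= INR n) by (apply (le_INR 1); auto).
  nra.
Qed.

Lemma realkey (n x1 y1 x2 y2 a u v m : R) : x1^2+y1^2+x2^2+y2^2 = 1 -> 1 <= n ->
 a*(-y1) + (-u*x2 - v*y2) = m*(-y1) -> a*x1 + (u*y2 - v*x2) = m*x1 ->
 a*(-n*y2) + (u*x1+v*y1) = m*(-n*y2) -> a*(n*x2) + (v*x1 - u*y1) = m*(n*x2) ->
 u = 0 /\ v = 0 /\ a = m.
Proof.
  intros HS Hn E1 E2 E3 E4.
  assert (Hd : (m - a) * (x1^2 + y1^2 + n * (x2^2 + y2^2)) = 0).
  { assert (H := f_equal2 Rplus (f_equal2 Rplus (f_equal (Rmult (-y1)) E1) (f_equal (Rmult x1) E2))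
                      (f_equal2 Rplus (f_equal (Rmult (-y2)) E3) (f_equal (Rmult x2) E4))).
    lra. }
  assert (Hp : 0 < x1^2 + y1^2 + n * (x2^2 + y2^2)) by nra.
  assert (Hm : m = a).
  { apply Rmult_integral in Hd. destruct Hd; lra. }
  subst m.
  assert (F1 : u * x2 + v * y2 = 0) by lra.
  assert (F2 : u * y2 - v * x2 = 0) by lra.
  assert (F3 : u * x1 + v * y1 = 0) by lra.
  assert (F4 : v * x1 - u * y1 = 0) by lra.
  assert (G1 : u * (x1^2+y1^2+x2^2+y2^2) = 0).
  { assert (H := f_equal2 Rplus (f_equal2 Rplus (f_equal (Rmult x2) F1) (f_equal (Rmult y2) F2))
                      (f_equal2 Rplus (f_equal (Rmult x1) F3) (f_equal (Rmult (-y1)) F4))).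
    lra. }
  assert (G2 : v * (x1^2+y1^2+x2^2+y2^2) = 0).
  { assert (H := f_equal2 Rplus (f_equal2 Rplus (f_equal (Rmult y2) F1) (f_equal (Rmult (-x2)) F2))
                      (f_equal2 Rplus (f_equal (Rmult y1) F3) (f_equal (Rmult x1) F4))).
    lra. }
  rewrite HS in G1, G2. lra.
Qed.

Lemma collinear_key n A U V p l : S3 p -> (1 <= n)%nat ->
  Xf n A U V p = rscale l (H_n1 n p) ->
  U = 0 /\ V = 0 /\ A = l * / sqrt (dot (gen_n1 n p) (gen_n1 n p)).
Proof.
  intros HS Hn E.
  assert (1 <= INR n) by (apply (le_INR 1); auto).
  revert E. unfold H_n1.
  generalize (/ sqrt (dot (gen_n1 n p) (gen_n1 n p))). intro s.
  destruct p as [[x1 y1] [x2 y2]]; unfold Xf, rscale, gen_n1, S3 in *; simpl in *.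
  intro E. injection E. intros E4 E3 E2 E1.
  apply (realkey (INR n) x1 y1 x2 y2 A U V (l * s)); try lra.
Qed.

Lemma Xf_coll n A U V p : (1 <= n)%nat -> S3 p -> U = 0 -> V = 0 ->
  Xf n A U V p = rscale (A * sqrt (dot (gen_n1 n p) (gen_n1 n p))) (H_n1 n p).
Proof.
  intros Hn HS HU HV. subst.
  assert (Hs : 0 < sqrt (dot (gen_n1 n p) (gen_n1 n p))) by (apply sqrt_lt_R0; apply GG_pos; auto).
  unfold H_n1. revert Hs. generalize (sqrt (dot (gen_n1 n p) (gen_n1 n p))). intros s Hs.
  destruct p as [[x1 y1] [x2 y2]]; unfold Xf, rscale, gen_n1; simpl.
  f_equal; f_equal; field; lra.
Qed.

Lemma Cpow_norm x y n : fst (Defs.Cpow (x,y) n) ^ 2 + snd (Defs.Cpow (x,y) n) ^ 2 = (x^2+y^2)^n.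
Proof.
  induction n as [|m IH]. simpl; ring.
  rewrite <- (tech_pow_Rmult (x^2+y^2) m), <- IH.
  change (Defs.Cpow (x,y) (S m)) with (Cmult (x,y) (Defs.Cpow (x,y) m)).
  destruct (Defs.Cpow (x,y) m) as [c d]. unfold Cmult. cbn [fst snd]. ring.
Qed.

Lemma fib_iff n w p : fibre_over n w p <-> S3 p /\ qr n w p = 0 /\ qi n w p = 0.
Proof.
  destruct p as [[x1 y1] [x2 y2]]; unfold fibre_over, qr, qi, zr, zi; simpl.
  split.
  - intros [HS HE]. injection HE. intros. split; auto. split; lra.
  - intros [HS [H1 H2]]. split; auto. unfold Cmult; f_equal; lra.
Qed.

Lemma both_zero n w1 w2 p : S3 p -> qr n w1 p = 0 -> qi n w1 p = 0 ->
  qr n w2 p = 0 -> qi n w2 p = 0 -> w1 = w2.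
Proof.
  destruct p as [[x1 y1] [x2 y2]]; unfold S3, qr, qi, zr, zi; cbn [fst snd coord].
  pose proof (Cpow_norm x1 y1 n) as HN.
  revert HN. generalize (Defs.Cpow (x1, y1) n). intros [zr zi] HN. cbn [fst snd] in *.
  intros HS A B C D.
  assert (Hz : 0 < zr^2 + zi^2).
  { rewrite HN. destruct n as [|k]. simpl; lra. apply pow_lt.
    destruct (Req_dec (x1^2+y1^2) 0) as [E|E]; [|nra].
    exfalso. rewrite E in HN. rewrite pow_i in HN by lia.
    assert (zr = 0) by nra. assert (zi = 0) by nra. subst. nra. }
  destruct w1 as [a1 b1]; destruct w2 as [a2 b2]; simpl in *.
  assert (E1 : (a1 - a2) * zr - (b1 - b2) * zi = 0) by lra.
  assert (E2 : (a1 - a2) * zi + (b1 - b2) * zr = 0) by lra.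
  assert (E3 : ((a1-a2)^2 + (b1-b2)^2) * (zr^2+zi^2) = 0).
  { replace (((a1-a2)^2 + (b1-b2)^2) * (zr^2+zi^2)) with
      (((a1 - a2) * zr - (b1 - b2) * zi)^2 + ((a1 - a2) * zi + (b1 - b2) * zr)^2) by ring.
    rewrite E1, E2. ring. }
  apply Rmult_integral in E3. destruct E3 as [E3|E3]; [|lra].
  pose proof (pow2_ge_0 (a1-a2)). pose proof (pow2_ge_0 (b1-b2)).
  assert (Ha : (a1-a2)^2 = 0) by lra. assert (Hb : (b1-b2)^2 = 0) by lra.
  assert (a1-a2=0) by (apply Rsqr_0_uniq; unfold Rsqr; simpl in Ha; lra).
  assert (b1-b2=0) by (apply Rsqr_0_uniq; unfold Rsqr; simpl in Hb; lra).
  assert (a1 = a2) by lra. assert (b1 = b2) by lra. subst; reflexivity.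
Qed.

Lemma uv_zero n w1 w2 p : uf n w1 w2 p = 0 -> vf n w1 w2 p = 0 ->
  (qr n w1 p = 0 /\ qi n w1 p = 0) \/ (qr n w2 p = 0 /\ qi n w2 p = 0).
Proof.
  unfold uf, vf. generalize (qr n w1 p) (qi n w1 p) (qr n w2 p) (qi n w2 p).
  intros a b c d U V.
  assert (E : (a^2+b^2)*(c^2+d^2) = 0).
  { replace ((a^2+b^2)*(c^2+d^2)) with ((a*c-b*d)^2 + (a*d+b*c)^2) by ring.
    rewrite U, V. ring. }
  apply Rmult_integral in E. destruct E; [left|right]; split; nra.
Qed.

Theorem lemma7 (n : nat) (L1 L2 : pt -> Prop) :
  (1 <= n)%nat ->
  regular_fibre n L1 -> regular_fibre n L2 ->
  (exists p, ~ (L1 p <-> L2 p)) ->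
  exists X : pt -> pt,
    smooth_field X /\ tangent_to_S3 X /\
    (forall p, S3 p -> X p <> zero_pt) /\
    (forall p, L1 p -> exists l : R, 0 < l /\ X p = rscale l (H_n1 n p)) /\
    (forall p, L2 p -> exists l : R, l < 0 /\ X p = rscale l (H_n1 n p)) /\
    (forall p, S3 p -> ~ L1 p -> ~ L2 p ->
       ~ (exists l : R, X p = rscale l (H_n1 n p))).
Proof.
  intros Hn [w1 [Hw1 HL1]] [w2 [Hw2 HL2]] [p0 Hp0].
  assert (Hw : w1 <> w2).
  { intro E; subst w2. apply Hp0. rewrite HL1, HL2. tauto. }
  assert (Hs : forall p, S3 p -> 0 < sqrt (dot (gen_n1 n p) (gen_n1 n p))).
  { intros p HS; apply sqrt_lt_R0; apply GG_pos; auto. }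
  exists (fun p => Xf n (af n w1 w2 p) (uf n w1 w2 p) (vf n w1 w2 p) p).
  destruct (Puva n w1 w2) as [Pu [Pv Pa]].
  split; [|split; [|split; [|split; [|split]]]].
  - intros i Hi. apply Poly_smooth.
    destruct i as [|[|[|[|i]]]]; [| | | |lia]; unfold Xf; simpl;
    solve_poly; auto; first [apply (Pcoord 0) | apply (Pcoord 1) | apply (Pcoord 2) | apply (Pcoord 3)].
  - intros p _. apply Xf_tangent.
  - intros p HS H0.
    assert (E : Xf n (af n w1 w2 p) (uf n w1 w2 p) (vf n w1 w2 p) p = rscale 0 (H_n1 n p)).
    { rewrite H0. unfold zero_pt, rscale. f_equal; f_equal; ring. }
    apply collinear_key in E; auto. destruct E as [U [V A]].
    rewrite Rmult_0_l in A.
    destruct (uv_zero n w1 w2 p U V) as [[Q1 Q2]|[Q1 Q2]];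
    unfold af in A; rewrite Q1, Q2 in A.
    + assert (~ (qr n w2 p = 0 /\ qi n w2 p = 0)).
      { intros [R1 R2]. apply Hw. eapply both_zero; eauto. }
      nra.
    + assert (~ (qr n w1 p = 0 /\ qi n w1 p = 0)).
      { intros [R1 R2]. apply Hw. eapply both_zero; eauto. }
      nra.
  - intros p Hp. apply HL1 in Hp. apply fib_iff in Hp. destruct Hp as [HS [Q1 Q2]].
    assert (~ (qr n w2 p = 0 /\ qi n w2 p = 0)).
    { intros [R1 R2]. apply Hw. eapply both_zero; eauto. }
    exists (af n w1 w2 p * sqrt (dot (gen_n1 n p) (gen_n1 n p))). split.
    + apply Rmult_lt_0_compat; auto. unfold af. rewrite Q1, Q2. nra.
    + apply Xf_coll; auto; unfold uf, vf; rewrite Q1, Q2; ring.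
  - intros p Hp. apply HL2 in Hp. apply fib_iff in Hp. destruct Hp as [HS [Q1 Q2]].
    assert (~ (qr n w1 p = 0 /\ qi n w1 p = 0)).
    { intros [R1 R2]. apply Hw. eapply both_zero; eauto. }
    exists (af n w1 w2 p * sqrt (dot (gen_n1 n p) (gen_n1 n p))). split.
    + assert (0 < sqrt (dot (gen_n1 n p) (gen_n1 n p))) by auto.
      assert (af n w1 w2 p < 0) by (unfold af; rewrite Q1, Q2; nra). nra.
    + apply Xf_coll; auto; unfold uf, vf; rewrite Q1, Q2; ring.
  - intros p HS N1 N2 [l E].
    apply collinear_key in E; auto. destruct E as [U [V _]].
    destruct (uv_zero n w1 w2 p U V) as [[Q1 Q2]|[Q1 Q2]].
    + apply N1, HL1, fib_iff; auto.
    + apply N2, HL2, fib_iff; auto.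
Qed.
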